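(* Let $m\ge n$, $B\in\mathbb R^{n\times m}$ of full row rank, $f,h$ convex and continuously differentiable with Lipschitz gradients, $\mathcal L(u,p)=f(u)-h(p)+(Bu,p)$ with saddle point $(u^*,p^* )$, and $T_{\mathcal U},\mathcal I_{\mathcal V}$ ($m\times m$), $T_{\mathcal P},\mathcal I_{\mathcal Q}$ ($n\times n$) symmetric positive definite. Suppose $h\in\mathcal S^{1,1}_{\mu_{h,T_{\mathcal P}},L_{h,T_{\mathcal P}}}$ w.r.t. $T_{\mathcal P}$ with $L_{h,T_{\mathcal P}}\le1$, $f\in\mathcal S^{1,1}_{\mu_{f,T_{\mathcal U}},L_{f,T_{\mathcal U}}}$ w.r.t. $T_{\mathcal U}$ with $L_{f,T_{\mathcal U}}\le1$, $f_B$ is strongly convex w.r.t. $\mathcal I_{\mathcal V}$ with $\mu_{f_B,\mathcal I_{\mathcal V}}>0$, and $h_B$ is strongly convex w.r.t. $\mathcal I_{\mathcal Q}$ with $\mu_{h_B,\mathcal I_{\mathcal Q}}>0$. Let $(u_k,p_k)$ be generated from $(u_0,p_0)$ by $$u_{k+1/2}=u_k-T_{\mathcal U}^{-1}(\nabla f(u_k)+B^\top p_k),\qquad p_{k+1}=p_k-\alpha_k\mathcal I_{\mathcal Q}^{-1}(\nabla h(p_k)-Bu_{k+1/2}),$$ where $u_{k+1}$ is any point with $\|\nabla\tilde f_B(u_{k+1};u_k,p_{k+1})\|^2_{\mathcal I_{\mathcal V}^{-1}}\le\epsilon_k$ for $k=0,1,2,\dots$, and $\tilde f_B(u;u_k,p_{k+1})=f_B(u)+\frac1{2\alpha_k}\|u-u_k+\alpha_k\mathcal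 I_{\mathcal V}^{-1}B^\top(p_{k+1}-T_{\mathcal P}^{-1}\nabla h(p_{k+1}))\|^2_{\mathcal I_{\mathcal V}}$. Then for $0<\alpha_k<\mu_{h_B,\mathcal I_{\mathcal Q}}/L_{S,\mathcal Q}^2$ and $\mu_k=\min\{\mu_{f_B,\mathcal I_{\mathcal V}}/2,\ \mu_{h_B,\mathcal I_{\mathcal Q}}-\alpha_kL_{S,\mathcal Q}^2\}$, $$\mathcal E(u_{k+1},p_{k+1})\le\frac1{1+\alpha_k\mu_k}\mathcal E(u_k,p_k)+\frac{2\alpha_k}{(1+\alpha_k\mu_k)\mu_{f_B,\mathcal I_{\mathcal V}}}\epsilon_k,$$ where $L_{S,\mathcal Q}^2=L_{h_B,\mathcal I_{\mathcal Q}}^2+L_{e_{\mathcal U},\mathcal I_{\mathcal V}}^2L_S^2$. In particular, for $\alpha_k=\mu_{h_B,\mathcal I_{\mathcal Q}}/(2L_{S,\mathcal Q}^2)$, $$\mathcal E(u_{n+1},p_{n+1})\le\rho^{n+1}\mathcal E(u_0,p_0)+\frac{\mu_{h_B,\mathcal I_{\mathcal Q}}}{\mu_{f_B,\mathcal I_{\mathcal V}}L_{S,\mathcal Q}^2}\sum_{k=0}^n\rho^{n-k+1}\epsilon_k,$$ where $\mu=\min\{\mu_{f_B,\mathcal I_{\mathcal V}},\mu_{h_B,\mathcal I_{\mathcal Q}}\}$ and $\rho=1/(1+\mu_{h_B,\mathcal I_{\mathcal Q}}\mu/(4L_{S,\mathcal Q}^2))\in(0,1)$.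
   Context: A saddle point satisfies $\nabla f(u^* )+B^\top p^*=0$, $Bu^*=\nabla h(p^* )$. For SPD $M$, $\|x\|_M=(Mx,x)^{1/2}$; $D_g(y,x)=g(y)-g(x)-(\nabla g(x),y-x)$; $g\in\mathcal S^{1,1}_{\mu_{g,M},L_{g,M}}$ w.r.t. $M$ means $\frac{\mu_{g,M}}2\|x-y\|_M^2\le D_g(y,x)\le\frac{L_{g,M}}2\|x-y\|_M^2$ for all $x,y$. Define $f_B(u)=f(u)+\frac12(B^\top T_{\mathcal P}^{-1}Bu,u)$, $h_B(p)=h(p)+\frac12(BT_{\mathcal U}^{-1}B^\top p,p)$, $e_{\mathcal U}(u)=u-T_{\mathcal U}^{-1}\nabla f(u)$, $\mathcal E(u,p)=\frac12\|u-u^*\|^2_{\mathcal I_{\mathcal V}}+\frac12\|p-p^*\|^2_{\mathcal I_{\mathcal Q}}$; $L_{h_B,\mathcal I_{\mathcal Q}}$ is the Lipschitz constant of $\nabla h_B$ (dual norm $\|\cdot\|_{\mathcal I_{\mathcal Q}^{-1}}$ vs $\|\cdot\|_{\mathcal I_{\mathcal Q}}$), $L_{e_{\mathcal U},\mathcal I_{\mathcal V}}$ the Lipschitz constant of $e_{\mathcal U}$ in $\|\cdot\|_{\mathcal I_{\mathcal V}}$, $L_S^2=\lambda_{\max}(\mathcal I_{\mathcal Q}^{-1}B\mathcal I_{\mathcal V}^{-1}B^\top)$. *)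

(* Defs.v *)
From HB Require Import structures.
From mathcomp Require Import all_boot all_order all_algebra.
From mathcomp Require Import all_classical all_reals all_analysis.
Set Implicit Arguments. Unset Strict Implicit. Unset Printing Implicit Defensive.
Import Order.TTheory GRing.Theory Num.Theory.
Local Open Scope ring_scope.

Section Defs.
Variable R : realType.

Definition dotv k (x y : 'cV[R]_k) : R := (x^T *m y) 0 0.

Definition nsq k (M : 'M[R]_k) (x : 'cV[R]_k) : R := dotv (M *m x) x.

Definition SPD k (M : 'M[R]_k) : Prop :=
  M^T = M /\ forall x : 'cV[R]_k, x != 0 -> 0 < nsq M x.

Definition bregman k (g : 'cV[R]_k -> R) (dg : 'cV[R]_k -> 'cV[R]_k) y x : R :=
  g y - g x - dotv (dg x) (y - x).

Definition S11 k (g : 'cV[R]_k -> R) (dg : 'cV[R]_k -> 'cV[R]_k)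
  (M : 'M[R]_k) (mu L : R) : Prop :=
  forall x y, mu / 2 * nsq M (x - y) <= bregman g dg y x /\
              bregman g dg y x <= L / 2 * nsq M (x - y).

Definition strongly_convex k (g : 'cV[R]_k -> R) (dg : 'cV[R]_k -> 'cV[R]_k)
  (M : 'M[R]_k) (mu : R) : Prop :=
  forall x y, mu / 2 * nsq M (x - y) <= bregman g dg y x.

Variables (m n : nat).

Definition fB (f : 'cV[R]_m -> R) (B : 'M[R]_(n, m)) (TP : 'M[R]_n) u : R :=
  f u + 1 / 2 * dotv (B^T *m invmx TP *m B *m u) u.
Definition dfB (gf : 'cV[R]_m -> 'cV[R]_m) (B : 'M[R]_(n, m)) (TP : 'M[R]_n) u
  : 'cV[R]_m := gf u + B^T *m invmx TP *m B *m u.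

Definition hB (h : 'cV[R]_n -> R) (B : 'M[R]_(n, m)) (TU : 'M[R]_m) p : R :=
  h p + 1 / 2 * dotv (B *m invmx TU *m B^T *m p) p.
Definition dhB (gh : 'cV[R]_n -> 'cV[R]_n) (B : 'M[R]_(n, m)) (TU : 'M[R]_m) p
  : 'cV[R]_n := gh p + B *m invmx TU *m B^T *m p.

Definition eU (gf : 'cV[R]_m -> 'cV[R]_m) (TU : 'M[R]_m) u : 'cV[R]_m :=
  u - invmx TU *m gf u.

Definition Energy (IV : 'M[R]_m) (IQ : 'M[R]_n) (us : 'cV[R]_m) (ps : 'cV[R]_n)
  u p : R := 1 / 2 * nsq IV (u - us) + 1 / 2 * nsq IQ (p - ps).

Definition ftB (f : 'cV[R]_m -> R) (gh : 'cV[R]_n -> 'cV[R]_n) (B : 'M[R]_(n, m))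
  (TP : 'M[R]_n) (IV : 'M[R]_m) (a : R) (uk : 'cV[R]_m) (p1 : 'cV[R]_n) u : R :=
  fB f B TP u + 1 / (2 * a) *
    nsq IV (u - uk + a *: (invmx IV *m B^T *m (p1 - invmx TP *m gh p1))).

(* its gradient in u (IV symmetric):
   grad f_B(u) + (1/a) IV (u - uk + a IV^{-1} B^T (p1 - TP^{-1} grad h(p1))) *)
Definition dftB (gf : 'cV[R]_m -> 'cV[R]_m) (gh : 'cV[R]_n -> 'cV[R]_n)
  (B : 'M[R]_(n, m)) (TP : 'M[R]_n) (IV : 'M[R]_m) (a : R) (uk : 'cV[R]_m)
  (p1 : 'cV[R]_n) u : 'cV[R]_m :=
  dfB gf B TP u +
    a^-1 *: (IV *m (u - uk + a *: (invmx IV *m B^T *m (p1 - invmx TP *m gh p1)))).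

End Defs.

(* Main.v *)
Require Import Defs.
From HB Require Import structures.
From mathcomp Require Import all_boot all_order all_algebra.
From mathcomp Require Import all_classical all_reals all_analysis.
From mathcomp Require Import ring lra.
Import Order.TTheory GRing.Theory Num.Theory.
Local Open Scope ring_scope.

Set Implicit Arguments. Unset Strict Implicit. Unset Printing Implicit Defensive.


Section Basic.
Variable R : realType.

Lemma dotvC k (x y : 'cV[R]_k) : dotv x y = dotv y x.
Proof. by rewrite /dotv -{1}(trmxK y) -trmx_mul mxE. Qed.

Lemma dotvDl k (x y z : 'cV[R]_k) : dotv (x + y) z = dotv x z + dotv y z.
Proof. by rewrite /dotv linearD /= mulmxDl mxE. Qed.
Lemma dotvDr k (x y z : 'cV[R]_k) : dotv z (x + y) = dotv z x + dotv z y.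
Proof. by rewrite /dotv mulmxDr mxE. Qed.
Lemma dotvZl k a (x z : 'cV[R]_k) : dotv (a *: x) z = a * dotv x z.
Proof. by rewrite /dotv linearZ /= -scalemxAl mxE. Qed.
Lemma dotvZr k a (x z : 'cV[R]_k) : dotv z (a *: x) = a * dotv z x.
Proof. by rewrite /dotv -scalemxAr mxE. Qed.
Lemma dotvNl k (x z : 'cV[R]_k) : dotv (- x) z = - dotv x z.
Proof. by rewrite -scaleN1r dotvZl mulN1r. Qed.
Lemma dotvNr k (x z : 'cV[R]_k) : dotv z (- x) = - dotv z x.
Proof. by rewrite -scaleN1r dotvZr mulN1r. Qed.
Lemma dotvBl k (x y z : 'cV[R]_k) : dotv (x - y) z = dotv x z - dotv y z.
Proof. by rewrite dotvDl dotvNl. Qed.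
Lemma dotvBr k (x y z : 'cV[R]_k) : dotv z (x - y) = dotv z x - dotv z y.
Proof. by rewrite dotvDr dotvNr. Qed.
Lemma dotv0l k (z : 'cV[R]_k) : dotv 0 z = 0.
Proof. by rewrite /dotv linear0 mul0mx mxE. Qed.
Lemma dotv0r k (z : 'cV[R]_k) : dotv z 0 = 0.
Proof. by rewrite /dotv mulmx0 mxE. Qed.
Lemma dotvMl k l (A : 'M[R]_(k, l)) x y : dotv (A *m x) y = dotv x (A^T *m y).
Proof. by rewrite /dotv trmx_mul mulmxA. Qed.
Lemma dotvMr k l (A : 'M[R]_(k, l)) x y : dotv y (A *m x) = dotv (A^T *m y) x.
Proof. by rewrite dotvC dotvMl dotvC. Qed.

Lemma dotvxx k (x : 'cV[R]_k) : dotv x x = \sum_i (x i 0) ^+ 2.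
Proof. by rewrite /dotv !mxE; apply: eq_bigr => i _; rewrite mxE expr2. Qed.

Lemma dotvxx_ge0 k (x : 'cV[R]_k) : 0 <= dotv x x.
Proof. by rewrite dotvxx; apply: sumr_ge0 => i _; apply: sqr_ge0. Qed.

Lemma dotvxx_eq0 k (x : 'cV[R]_k) : dotv x x = 0 -> x = 0.
Proof.
rewrite dotvxx => /eqP; rewrite psumr_eq0; last by move=> i _; apply: sqr_ge0.
move=> /allP H; apply/matrixP => i j; rewrite ord1 mxE.
by have := H i (mem_index_enum _); rewrite sqrf_eq0 => /eqP.
Qed.

Lemma nsqE k (M : 'M[R]_k) x : nsq M x = dotv (M *m x) x.
Proof. by []. Qed.

Lemma nsqZ k (M : 'M[R]_k) a x : nsq M (a *: x) = a ^+ 2 * nsq M x.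
Proof. by rewrite /nsq -scalemxAr dotvZl dotvZr mulrA expr2. Qed.
Lemma nsqN k (M : 'M[R]_k) x : nsq M (- x) = nsq M x.
Proof. by rewrite -scaleN1r nsqZ sqrrN expr1n mul1r. Qed.
Lemma nsqB k (M : 'M[R]_k) x y : M^T = M -> nsq M (x - y) = nsq M x - 2 * dotv (M *m x) y + nsq M y.
Proof.
move=> MT; rewrite /nsq mulmxBr dotvBl !dotvBr (dotvMl M y x) MT (dotvC y (M *m x)).
ring.
Qed.
Lemma nsqD k (M : 'M[R]_k) x y : M^T = M -> nsq M (x + y) = nsq M x + 2 * dotv (M *m x) y + nsq M y.
Proof.
move=> MT; rewrite /nsq mulmxDr dotvDl !dotvDr (dotvMl M y x) MT (dotvC y (M *m x)); ring.
Qed.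
Lemma nsq_sym k (M : 'M[R]_k) x y : M^T = M -> nsq M (x - y) = nsq M (y - x).
Proof. by move=> MT; rewrite -opprB nsqN. Qed.

Lemma nsq_ge0 k (M : 'M[R]_k) x : SPD M -> 0 <= nsq M x.
Proof.
case=> _ H; have [->|/H/ltW //] := eqVneq x 0.
by rewrite /nsq mulmx0 dotv0l.
Qed.

Lemma nsq_eq0 k (M : 'M[R]_k) x : SPD M -> nsq M x = 0 -> x = 0.
Proof.
case=> _ H e; apply/eqP; apply: contraT => /H; by rewrite e ltxx.
Qed.

Lemma SPD_unit k (M : 'M[R]_k) : SPD M -> M \in unitmx.
Proof.
move=> HM; rewrite -row_free_unit -kermx_eq0; apply/eqP.
apply/row_matrixP => i; rewrite row0.
set v := row i (kermx M).
have: v *m M = 0 by apply/sub_kermxP; rewrite row_sub.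
move=> vM; apply: trmx_inj; rewrite trmx0.
apply: (nsq_eq0 HM); rewrite /nsq.
case: HM => MT _.
by rewrite -MT -trmx_mul vM trmx0 dotv0l.
Qed.

Lemma SPD_inv k (M : 'M[R]_k) : SPD M -> SPD (invmx M).
Proof.
move=> HM; have Mu := SPD_unit HM; case: (HM) => MT H; split.
  by rewrite trmx_inv MT.
move=> x x0; have Ex : M *m (invmx M *m x) = x by rewrite mulmxA mulmxV // mul1mx.
rewrite /nsq; rewrite -[X in dotv _ X]Ex dotvC; apply: H.
apply: contra x0 => /eqP H0; by rewrite -Ex H0 mulmx0.
Qed.

Lemma SPD_sym k (M : 'M[R]_k) : SPD M -> M^T = M.
Proof. by case. Qed.

Lemma young_bound k (M : 'M[R]_k) (g y : 'cV[R]_k) (c X : R) :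
  SPD M -> 0 <= c -> 0 <= X -> nsq (invmx M) g <= c * X ->
  2 * dotv g y <= X + c * nsq M y.
Proof.
move=> HM c0 X0 Hg; have Mu := SPD_unit HM; have MT := SPD_sym HM.
have HMi := SPD_inv HM.
have [ce|cpos] := eqVneq c 0.
  rewrite ce mul0r in Hg *.
  have : nsq (invmx M) g = 0 by apply/eqP; rewrite eq_le Hg nsq_ge0.
  by move/(nsq_eq0 HMi) ->; rewrite dotv0l mul0r; lra.
have cp : 0 < c by rewrite lt_def cpos c0.
have H0 := nsq_ge0 (c^-1 *: (invmx M *m g) - y) HM.
rewrite nsqB // nsqZ -scalemxAr dotvZl mulmxA mulmxV // mul1mx in H0.
have E : nsq M (invmx M *m g) = nsq (invmx M) g.
  by rewrite /nsq mulmxA mulmxV // mul1mx dotvC.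
rewrite E in H0.
set Q := nsq (invmx M) g in H0 Hg *; set D := dotv g y in H0 *; set N := nsq M y in H0 *.
set ci := c^-1 in H0 *.
have cci : c * ci = 1 by rewrite /ci mulfV.
have cip : 0 < ci by rewrite /ci invr_gt0.
have F1 : 0 <= c * (ci ^+ 2 * Q - 2 * (ci * D) + N) by apply: mulr_ge0 => //; apply: ltW.
have F2 : 0 <= ci * (c * X - Q) by apply: mulr_ge0; [apply: ltW | rewrite subr_ge0].
have E1 : c * (ci ^+ 2 * Q - 2 * (ci * D) + N) = ci * Q - 2 * D + c * N.
  have -> : c * (ci ^+ 2 * Q - 2 * (ci * D) + N) = (c * ci) * ci * Q - 2 * (c * ci) * D + c * N by ring.
  rewrite cci; ring.
have E2 : ci * (c * X - Q) = X - ci * Q by rewrite mulrBr mulrA (mulrC ci) cci mul1r.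
rewrite E1 in F1; rewrite E2 in F2; lra.
Qed.

End Basic.


Section Conv.
Variable R : realType.

Lemma bregman_sum k (g : 'cV[R]_k -> R) dg x y :
  bregman g dg y x + bregman g dg x y = dotv (dg y - dg x) (y - x).
Proof.
rewrite /bregman -(opprB y x) dotvNr dotvBl; ring.
Qed.

Lemma strong_mono k (g : 'cV[R]_k -> R) dg M mu x y :
  M^T = M -> strongly_convex g dg M mu ->
  mu * nsq M (y - x) <= dotv (dg y - dg x) (y - x).
Proof.
move=> MT Hs; rewrite -(bregman_sum g).
have H1 := Hs x y; have H2 := Hs y x.
rewrite (nsq_sym _ _ MT) in H1; lra.
Qed.

Lemma half_cocoercive k (g : 'cV[R]_k -> R) dg M mu L x y :
  SPD M -> S11 g dg M mu L -> 0 <= mu -> L <= 1 ->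
  nsq (invmx M) (dg y - dg x) / 2 <= bregman g dg y x.
Proof.
move=> HM HS mu0 L1.
have Mu := SPD_unit HM; have MT := SPD_sym HM.
set G := dg y - dg x.
set z := y - invmx M *m G.
have A1 : 0 <= bregman g dg z x.
  have [H _] := HS x z; apply: le_trans H.
  by apply: mulr_ge0; [apply: divr_ge0 | apply: nsq_ge0].
have A2 : bregman g dg z y <= nsq (invmx M) G / 2.
  have [_ H] := HS y z; apply: (le_trans H).
  have -> : y - z = invmx M *m G by rewrite /z opprB addrC subrK.
  have -> : nsq M (invmx M *m G) = nsq (invmx M) G.
    by rewrite /nsq mulmxA mulmxV // mul1mx dotvC.
  have := nsq_ge0 G (SPD_inv HM); move=> q0.
  have := mulr_ge0 (ltW (ltr01 : (0:R) < 1)) q0; have := mulr_ge0 (eqbRL (subr_ge0 L 1) L1) q0; nra.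
move: A1 A2; rewrite /bregman.
have -> : z - x = (y - x) - invmx M *m G by rewrite /z addrAC.
have -> : z - y = - (invmx M *m G) by rewrite /z addrAC subrr add0r.
rewrite (dotvBr (y - x) (invmx M *m G)) dotvNr.
have E : dotv (dg y) (invmx M *m G) - dotv (dg x) (invmx M *m G) = nsq (invmx M) G.
  by rewrite -dotvBl /nsq dotvC.
lra.
Qed.

Lemma cocoercive k (g : 'cV[R]_k -> R) dg M mu L x y :
  SPD M -> S11 g dg M mu L -> 0 <= mu -> L <= 1 ->
  nsq (invmx M) (dg y - dg x) <= dotv (dg y - dg x) (y - x).
Proof.
move=> HM HS mu0 L1; rewrite -(bregman_sum g).
have H1 := half_cocoercive x y HM HS mu0 L1.
have H2 := half_cocoercive y x HM HS mu0 L1.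
rewrite -(opprB (dg y)) nsqN in H2; lra.
Qed.

Lemma energy_diff k (M : 'M[R]_k) a d : M^T = M ->
  nsq M a - nsq M (a - d) = 2 * dotv (M *m d) a - nsq M d.
Proof.
move=> MT; rewrite nsqB // (dotvMl M a d) MT dotvC; ring.
Qed.

End Conv.



Section Ray.
Import numFieldNormedType.Exports.
Local Open Scope classical_set_scope.
Variable R : realType.

Lemma nsq_sum k (M : 'M[R]_k) x :
  nsq M x = \sum_i (\sum_j M i j * x j 0) * x i 0.
Proof.
rewrite /nsq /dotv !mxE; apply: eq_bigr => i _; rewrite !mxE; congr (_ * _).
Qed.

Lemma nsq_cont k (M : 'M[R]_k) : continuous (fun v : 'rV[R]_k => nsq M v^T).
Proof.
have E : (fun v : 'rV[R]_k => nsq M v^T) =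
   (fun v => \sum_i (\sum_j M i j * v 0 j) * v 0 i).
  by apply: funext => v; rewrite nsq_sum; apply: eq_bigr => i _; rewrite mxE;
    congr (_ * _); apply: eq_bigr => j _; rewrite mxE.
rewrite E.
apply: (@continuous_big _ _ +%R 0 xpredT _ _) => [|i _].
  exact: add_continuous.
move=> v; apply: continuousM; last exact: coord_continuous.
move=> w; apply: (@continuous_big _ _ +%R 0 xpredT _ _) => [|j _].
  exact: add_continuous.
move=> z; apply: continuousM; first exact: cst_continuous.
exact: coord_continuous.
Qed.


Lemma ratio_max k (S V : 'M[R]_k) : SPD V -> (0 < k)%N ->
  exists2 c : 'cV[R]_k, c != 0 & forall w, nsq S w * nsq V c <= nsq S c * nsq V w.
Proof.
move=> HV k0.
pose F (v : 'rV[R]_k) := nsq S v^T / nsq V v^T.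
pose A := [set v : 'rV[R]_k | `|v| = 1].
have v0n : (const_mx 1 : 'rV[R]_k) != 0.
  apply/eqP => /matrixP /(_ ord0 (Ordinal k0)); rewrite !mxE => /eqP.
  by rewrite oner_eq0.
have A0 : A !=set0.
  exists (`|(const_mx 1 : 'rV[R]_k)|^-1 *: const_mx 1); rewrite /A /=.
  by apply: normrZV; rewrite unitfE normr_eq0.
have cA : compact A.
  apply: bounded_closed_compact.
    exists 1; split; first by rewrite realE ler01.
    by move=> M M1 v; rewrite /A /= => ->; apply: ltW.
  apply: (@preimage_closed _ _ (fun v : 'rV[R]_k => `|v|) [set 1]).
    by move=> v _; apply: norm_continuous.
  exact: closed_eq.
have nz : forall v, A v -> v^T != 0.
  move=> v; rewrite /A /= => Hv; apply/eqP => /(congr1 trmx); rewrite trmxK trmx0 => v0.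
  by move: Hv; rewrite v0 normr0 => /eqP; rewrite eq_sym oner_eq0.
have cF : {within A, continuous F}.
  apply: continuous_in_subspaceT => v; rewrite inE => Av.
  have -> : F = (fun v => nsq S v^T) \* (fun v => (nsq V v^T)^-1) by [].
  apply: continuousM; first exact: nsq_cont.
  apply: continuousV; last exact: nsq_cont.
  by apply/eqP => /(nsq_eq0 HV) /eqP; apply/negP; apply: nz.
have [c0 Ac0 Hmax] := EVT_max_rV A0 cA cF.
rewrite inE in Ac0.
have Vc0 : 0 < nsq V c0^T by case: HV => _ H; apply: H; apply: nz.
exists c0^T; first exact: nz.
move=> w; have [->|wn] := eqVneq w 0.
  by rewrite /nsq !mulmx0 !dotv0l mul0r mulr0.
have Vw : 0 < nsq V w by case: HV => _ H; apply: H.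
have wTn : `|w^T| \in GRing.unit.
  rewrite unitfE normr_eq0; apply: contra wn => /eqP /(congr1 trmx).
  by rewrite trmxK trmx0 => ->.
set t := `|w^T|^-1 *: w^T.
have At : A t by rewrite /A /= /t normrZV.
have := Hmax t; rewrite inE => /(_ At).
rewrite /F /t linearZ /= trmxK !nsqZ.
have e2 : `|w^T|^-1 ^+ 2 != 0 by rewrite expf_neq0 // invr_eq0 -unitfE.
rewrite -mulf_div divff // mul1r.
rewrite ler_pdivrMr // mulrAC ler_pdivlMr //.
Qed.

End Ray.


Section Eig.
Variable R : realType.
Variables (m n : nat) (B : 'M[R]_(n, m)) (IV : 'M[R]_m) (IQ : 'M[R]_n).
Hypotheses (HV : SPD IV) (HQ : SPD IQ).

Let P := invmx IQ.
Let Vi := invmx IV.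
Let K := P *m B *m Vi *m B^T.

Lemma PT : P^T = P. Proof. exact: SPD_sym (SPD_inv HQ). Qed.
Lemma ViT : Vi^T = Vi. Proof. exact: SPD_sym (SPD_inv HV). Qed.

Lemma KT : K^T = B *m Vi *m B^T *m P.
Proof. by rewrite /K !trmx_mul trmxK PT ViT !mulmxA. Qed.

Lemma eig_col a : eigenvalue K a -> exists2 x : 'cV[R]_n, K^T *m x = a *: x & x != 0.
Proof.
move/eigenvalueP => [z zK z0]; exists z^T.
  by rewrite -trmx_mul zK linearZ.
by apply: contra z0 => /eqP /(congr1 trmx); rewrite trmxK trmx0 => ->.
Qed.

Lemma LS2_ge0 a : eigenvalue K a -> 0 <= a.
Proof.
move=> /eig_col [x Kx x0].
have Hpos : 0 < nsq P x by case: (SPD_inv HQ) => _ H; apply: H.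
have E : dotv (K^T *m x) (P *m x) = nsq Vi (B^T *m (P *m x)).
  by rewrite KT -!mulmxA dotvMl /nsq dotvC.
rewrite Kx dotvZl dotvC -/(nsq P x) in E.
have := nsq_ge0 (B^T *m (P *m x)) (SPD_inv HV); rewrite -/Vi -E => H.
by rewrite -(pmulr_lge0 _ Hpos).
Qed.


Lemma col_eig a (x : 'cV[R]_n) : K^T *m x = a *: x -> x != 0 -> eigenvalue K a.
Proof.
move=> Kx x0; apply/eigenvalueP; exists x^T.
  by rewrite -(trmxK K) -trmx_mul Kx linearZ.
by apply: contra x0 => /eqP /(congr1 trmx); rewrite trmxK trmx0 => ->.
Qed.

Lemma quad_zero (D Q : R) : Q <= 0 -> (forall s, 2 * s * D + s ^+ 2 * Q <= 0) -> D = 0.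
Proof.
move=> Q0 H; set t := 1 - Q.
have tp : 0 < t by rewrite /t; lra.
have := H (D / t).
have key : (2 * (D / t) * D + (D / t) ^+ 2 * Q) * t ^+ 2 = D ^+ 2 * (2 - Q).
  rewrite /t; field; rewrite -/t; apply/eqP => e; move: tp; rewrite e ltxx //.
move=> H1.
have H2 : (2 * (D / t) * D + (D / t) ^+ 2 * Q) * t ^+ 2 <= 0.
  by apply: mulr_le0_ge0 => //; apply: sqr_ge0.
rewrite key in H2.
have : D ^+ 2 <= 0 by nra.
by move=> H3; apply/eqP; rewrite -sqrf_eq0 eq_le H3 sqr_ge0.
Qed.

Lemma rayleigh LS2 : 0 <= LS2 -> (forall a, eigenvalue K a -> a <= LS2) ->
  forall w, nsq P (B *m w) <= LS2 * nsq IV w.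
Proof.
move=> L0 Lmax w.
pose S := B^T *m P *m B.
have ES : forall w, nsq P (B *m w) = nsq S w.
  by move=> v; rewrite /nsq /S -!mulmxA (dotvMl B^T) trmxK.
have ST : S^T = S by rewrite /S !trmx_mul trmxK PT mulmxA.
have IVT := SPD_sym HV.
rewrite ES.
have [m0|mpos] := posnP m.
  have -> : w = 0 by apply/matrixP => i; exfalso; have := ltn_ord i; move: (nat_of_ord i); rewrite m0.
  by rewrite /nsq !mulmx0 dotv0l mulr0.
have [c c0 Hc] := ratio_max S HV mpos.
have Vc : 0 < nsq IV c by case: HV => _ H; apply: H.
set r := nsq S c / nsq IV c.
have Hr : forall v, nsq S v <= r * nsq IV v.
  move=> v; rewrite /r mulrAC ler_pdivlMr //; exact: Hc.
have [rle|rgt] := leP r LS2.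
  apply: (le_trans (Hr w)); apply: ler_wpM2r => //; exact: nsq_ge0.
exfalso.
have rpos : 0 < r by lra.
pose N := S - r *: IV.
have NT : N^T = N by rewrite /N linearB /= linearZ /= ST IVT.
have EN : forall v, nsq N v = nsq S v - r * nsq IV v.
  by move=> v; rewrite /nsq /N mulmxBl dotvBl -scalemxAl dotvZl.
have HN : forall v, nsq N v <= 0 by move=> v; rewrite EN subr_le0.
have HNc : nsq N c = 0 by rewrite EN /r divfK ?subrr // gt_eqF.
have D0 : forall v, dotv (N *m c) v = 0.
  move=> v; apply: (quad_zero (HN v)) => s0.
  have := HN (c + s0 *: v); rewrite nsqD // HNc nsqZ dotvZr; lra.
have Nc0 : N *m c = 0 by apply: dotvxx_eq0; apply: D0.
have Sc : S *m c = r *: (IV *m c).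
  by apply/eqP; rewrite -subr_eq0 scalemxAl -mulmxBl; apply/eqP.
set x := B *m c.
have Kx : K^T *m x = r *: x.
  rewrite KT /x -!mulmxA (mulmxA P) (mulmxA B^T) -/S.
  rewrite (mulmxA B^T P B) -/S Sc.
  by rewrite -!scalemxAr (mulmxA Vi) /Vi mulVmx ?mul1mx //; exact: SPD_unit.
have x0 : x != 0.
  apply/eqP => xe.
  have : S *m c = 0 by rewrite /S -!mulmxA -/x xe !mulmx0.
  rewrite Sc => /(congr1 (fun y => dotv y c)); rewrite dotvZl dotv0l -/(nsq IV c).
  by move/eqP; rewrite mulf_eq0 (gt_eqF rpos) (gt_eqF Vc).
have := Lmax r (col_eig Kx x0); lra.
Qed.

End Eig.


Ltac vsimpl := rewrite ?(mulmxDr, mulmxN, mulmxDl, mulNmx, mulmxA);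
  let i := fresh "i" in let j := fresh "j" in
  apply/matrixP => i j; rewrite !mxE; ring.

Section Main.
Variable R : realType.
Variables (m n : nat) (B : 'M[R]_(n, m)) (f : 'cV[R]_m -> R) (gf : 'cV[R]_m -> 'cV[R]_m)
  (h : 'cV[R]_n -> R) (gh : 'cV[R]_n -> 'cV[R]_n) (TU IV : 'M[R]_m) (TP IQ : 'M[R]_n).

Definition Au u p := dfB gf B TP u + B^T *m (p - invmx TP *m gh p).
Definition Gp u p := gh p - B *m (u - invmx TU *m (gf u + B^T *m p)).

Lemma Gform u p : Gp u p = dhB gh B TU p - B *m eU gf TU u.
Proof.
rewrite /Gp /dhB /eU; vsimpl.
Qed.

Lemma vsub3 k (a b c : 'cV[R]_k) : (a - c) - (a - b) = b - c.
Proof. by rewrite opprB addrC addrA subrK. Qed.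

Hypotheses (HTU : SPD TU) (HIV : SPD IV) (HTP : SPD TP) (HIQ : SPD IQ).

Lemma mono muh Lh muf Lf mufB muhB u p u' p' :
  0 <= muh -> S11 h gh TP muh Lh -> Lh <= 1 ->
  0 <= muf -> S11 f gf TU muf Lf -> Lf <= 1 ->
  strongly_convex (fB f B TP) (dfB gf B TP) IV mufB ->
  strongly_convex (hB h B TU) (dhB gh B TU) IQ muhB ->
  mufB / 2 * nsq IV (u - u') + muhB / 2 * nsq IQ (p - p') <=
  dotv (Au u p - Au u' p') (u - u') + dotv (Gp u p - Gp u' p') (p - p').
Proof.
move=> muh0 Sh Lh1 muf0 Sf Lf1 SCf SCh.
have SCf' := strong_mono u' u (SPD_sym HIV) SCf.
have SCh' := strong_mono p' p (SPD_sym HIQ) SCh.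
have CCf := cocoercive u' u HTU Sf muf0 Lf1.
have CCh := cocoercive p' p HTP Sh muh0 Lh1.
set Pi := invmx TP in CCh *; set Ui := invmx TU in CCf *.
have PiT : Pi^T = Pi by apply: SPD_sym; apply: SPD_inv.
have UiT : Ui^T = Ui by apply: SPD_sym; apply: SPD_inv.
set du := u - u' in SCf' CCf *; set dp := p - p' in SCh' CCh *.
set Dgf := gf u - gf u' in CCf *; set Dgh := gh p - gh p' in CCh *.
have Q1 := nsq_ge0 (B *m du - Dgh) (SPD_inv HTP).
have Q2 := nsq_ge0 (B^T *m dp + Dgf) (SPD_inv HTU).
rewrite -/Pi (nsqB (B *m du) Dgh PiT) in Q1.
rewrite -/Ui (nsqD (B^T *m dp) Dgf UiT) in Q2.
have EdfB : dfB gf B TP u - dfB gf B TP u' = Dgf + B^T *m (Pi *m (B *m du)).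
  by rewrite /dfB /Dgf /du /Pi; vsimpl.
have EdhB : dhB gh B TU p - dhB gh B TU p' = Dgh + B *m (Ui *m (B^T *m dp)).
  by rewrite /dhB /Dgh /dp /Ui; vsimpl.
have EA : Au u p - Au u' p' = (dfB gf B TP u - dfB gf B TP u') + B^T *m dp - B^T *m (Pi *m Dgh).
  by rewrite /Au /Dgh /dp /Pi; vsimpl.
have EG : Gp u p - Gp u' p' = (dhB gh B TU p - dhB gh B TU p') - B *m du + B *m (Ui *m Dgf).
  by rewrite !Gform /eU /Dgf /du /Ui; vsimpl.
clearbody du dp Dgf Dgh.
rewrite EA EG EdfB EdhB !dotvDl !dotvNl.
rewrite EdfB dotvDl in SCf'; rewrite EdhB dotvDl in SCh'.
have R1 : dotv (B^T *m (Pi *m (B *m du))) du = nsq Pi (B *m du) by rewrite dotvMl trmxK.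
have R2 : dotv (B *m (Ui *m (B^T *m dp))) dp = nsq Ui (B^T *m dp) by rewrite dotvMl.
have R3 : dotv (B^T *m dp) du = dotv (B *m du) dp by rewrite dotvMl trmxK dotvC.
have R4 : dotv (B^T *m (Pi *m Dgh)) du = dotv (Pi *m (B *m du)) Dgh.
  by rewrite dotvMl trmxK dotvMl PiT dotvC.
have R5 : dotv (B *m (Ui *m Dgf)) dp = dotv (Ui *m (B^T *m dp)) Dgf.
  by rewrite dotvMl dotvMl UiT dotvC.
rewrite R1 R2 R3 R4 R5; rewrite R1 in SCf'; rewrite R2 in SCh'.
lra.
Qed.



Lemma one_step muh Lh muf Lf mufB muhB LhB LeU LS2 us ps uk pk u1 p1 a e LSQ2 muk :
  gf us + B^T *m ps = 0 -> B *m us = gh ps ->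
  0 <= muh -> S11 h gh TP muh Lh -> Lh <= 1 ->
  0 <= muf -> S11 f gf TU muf Lf -> Lf <= 1 ->
  0 < mufB -> strongly_convex (fB f B TP) (dfB gf B TP) IV mufB ->
  0 < muhB -> strongly_convex (hB h B TU) (dhB gh B TU) IQ muhB ->
  (forall x y, nsq (invmx IQ) (dhB gh B TU x - dhB gh B TU y)
               <= LhB ^+ 2 * nsq IQ (x - y)) ->
  (forall x y, nsq IV (eU gf TU x - eU gf TU y) <= LeU ^+ 2 * nsq IV (x - y)) ->
  0 <= LS2 -> (forall w, nsq (invmx IQ) (B *m w) <= LS2 * nsq IV w) ->
  p1 = pk - a *: (invmx IQ *m
       (gh pk - B *m (uk - invmx TU *m (gf uk + B^T *m pk)))) ->
  nsq (invmx IV) (dftB gf gh B TP IV a uk p1 u1) <= e ->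
  LSQ2 = LhB ^+ 2 + LeU ^+ 2 * LS2 ->
  muk = Num.min (mufB / 2) (muhB - a * LSQ2) ->
  0 < a -> a < muhB / LSQ2 ->
  Energy IV IQ us ps u1 p1 <= 1 / (1 + a * muk) * Energy IV IQ us ps uk pk
        + 2 * a / ((1 + a * muk) * mufB) * e.
Proof.
move=> Hs1 Hs2 muh0 Sh Lh1 muf0 Sf Lf1 mufBp SCf muhBp SCh HLh HLe LS0 Hray Hp1 He eL emu ap alt.
have LSQ0 : 0 <= LSQ2 by rewrite eL; apply: addr_ge0; [apply: sqr_ge0 | apply: mulr_ge0 => //; apply: sqr_ge0].
have LSQp : 0 < LSQ2.
  rewrite lt_def LSQ0 andbT; apply/eqP => e0; move: alt; rewrite e0 invr0 mulr0; lra.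
have aL : a * LSQ2 < muhB by rewrite -ltr_pdivlMr.
have mukp : 0 < muk by rewrite emu lt_min; apply/andP; split; lra.
have mukf : muk <= mufB / 2 by rewrite emu ge_min lexx.
have mukh : muk <= muhB - a * LSQ2 by rewrite emu ge_min lexx orbT.
have IVT := SPD_sym HIV; have IQT := SPD_sym HIQ.
have IVu := SPD_unit HIV; have IQu := SPD_unit HIQ.
set r := dftB gf gh B TP IV a uk p1 u1.
have EAs : Au us ps = 0.
  rewrite /Au /dfB -Hs2.
  have -> : gf us = - (B^T *m ps) by apply/eqP; rewrite -addr_eq0 Hs1.
  vsimpl.
have EGs : Gp us ps = 0.
  by rewrite /Gp Hs1 mulmx0 subr0 Hs2 subrr.
have Er : IV *m (u1 - uk) = a *: (r - Au u1 p1).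
  have EIV : IV *m (invmx IV *m B^T *m (p1 - invmx TP *m gh p1)) = B^T *m (p1 - invmx TP *m gh p1).
    by rewrite !mulmxA mulmxV // mul1mx.
  rewrite /r /dftB (mulmxDr IV (u1 - uk)) -scalemxAr EIV /Au.
  rewrite ?(mulmxDr, mulmxN, mulmxDl, mulNmx, mulmxA).
  apply/matrixP => i j; rewrite !mxE; field; exact: lt0r_neq0.
have Ep : IQ *m (p1 - pk) = - (a *: Gp uk pk).
  rewrite Hp1 addrAC subrr add0r mulmxN -scalemxAr mulmxA mulmxV // mul1mx.
  by [].
set du := u1 - us; set dp := p1 - ps; set Du := u1 - uk; set Dp := p1 - pk.
have ED1 : nsq IV du - nsq IV (uk - us) = 2 * dotv (IV *m Du) du - nsq IV Du.
  by rewrite -(vsub3 u1 uk us) energy_diff.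
have ED2 : nsq IQ dp - nsq IQ (pk - ps) = 2 * dotv (IQ *m Dp) dp - nsq IQ Dp.
  by rewrite -(vsub3 p1 pk ps) energy_diff.
rewrite Er dotvZl dotvBl in ED1.
rewrite Ep dotvNl dotvZl in ED2.
have Mo := mono u1 p1 us ps muh0 Sh Lh1 muf0 Sf Lf1 SCf SCh.
rewrite EAs EGs !subr0 -/du -/dp in Mo.
have Y1 : 2 * dotv r du <= 4 / mufB * nsq (invmx IV) r + mufB / 4 * nsq IV du.
  apply: young_bound => //.
  - by apply: divr_ge0 => //; apply: ltW.
  - by apply: mulr_ge0; [apply: divr_ge0 => //; apply: ltW | apply: nsq_ge0; apply: SPD_inv].
  - by rewrite mulrA (_ : mufB / 4 * (4 / mufB) = 1) ?mul1r //; field; exact: lt0r_neq0.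
have EG : Gp u1 p1 - Gp uk pk = (dhB gh B TU p1 - dhB gh B TU pk) + - (B *m (eU gf TU u1 - eU gf TU uk)).
  by rewrite !Gform; vsimpl.
have Y2a : 2 * dotv (dhB gh B TU p1 - dhB gh B TU pk) (a *: dp) <= nsq IQ Dp + LhB ^+ 2 * nsq IQ (a *: dp).
  apply: young_bound; [done | exact: sqr_ge0 | exact: nsq_ge0 | exact: HLh].
have Y2b : 2 * dotv (- (B *m (eU gf TU u1 - eU gf TU uk))) (a *: dp) <= nsq IV Du + (LeU ^+ 2 * LS2) * nsq IQ (a *: dp).
  apply: young_bound => //.
  - by apply: mulr_ge0 => //; exact: sqr_ge0.
  - exact: nsq_ge0.
  rewrite nsqN; apply: (le_trans (Hray _)).
  rewrite (_ : LeU ^+ 2 * LS2 * nsq IV Du = LS2 * (LeU ^+ 2 * nsq IV Du)); last by ring.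
  apply: ler_wpM2l => //; exact: HLe.
rewrite !dotvZr !nsqZ in Y2a Y2b.
have EGd := congr1 (fun v => dotv v dp) EG; simpl in EGd.
rewrite dotvBl dotvDl in EGd.
have Hqr : nsq (invmx IV) r <= e by [].
have q1 : 0 <= nsq IV du by exact: nsq_ge0.
have q2 : 0 <= nsq IQ dp by exact: nsq_ge0.
rewrite /Energy.
set E0 := 1 / 2 * nsq IV (uk - us) + 1 / 2 * nsq IQ (pk - ps).
set E1 := 1 / 2 * nsq IV du + 1 / 2 * nsq IQ dp.
have P1 : a * (2 * dotv r du) <= a * (4 / mufB * nsq (invmx IV) r + mufB / 4 * nsq IV du).
  by rewrite ler_pM2l.
have P1' : a * (4 / mufB) * nsq (invmx IV) r <= a * (4 / mufB) * e.
  by apply: ler_wpM2l => //; apply: mulr_ge0; [apply: ltW | apply: divr_ge0 => //; apply: ltW].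
have P2 : a * (mufB / 2 * nsq IV du + muhB / 2 * nsq IQ dp) <= a * (dotv (Au u1 p1) du + dotv (Gp u1 p1) dp).
  by rewrite ler_pM2l.
have P3 : a * muk * nsq IV du <= a * (mufB / 2) * nsq IV du.
  by apply: ler_wpM2r => //; rewrite ler_pM2l.
have P4 : a * muk * nsq IQ dp <= a * (muhB - a * LSQ2) * nsq IQ dp.
  by apply: ler_wpM2r => //; rewrite ler_pM2l.
have K1 : E1 * (1 + a * muk) <= E0 + 2 * a * e / mufB.
  rewrite /E0 /E1.
  have e4 : a * (4 / mufB) * e = 2 * (2 * a * e / mufB) by rewrite !mulrA; field; exact: lt0r_neq0.
  rewrite eL in P4.
  have aEGd := congr1 (fun t => a * t) EGd; simpl in aEGd.
  have pos3 : 0 <= a * mufB * nsq IV du by apply: mulr_ge0 => //; apply: mulr_ge0; apply: ltW.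
  lra.
have pos : 0 < 1 + a * muk by apply: addr_gt0 => //; apply: mulr_gt0.
have -> : 1 / (1 + a * muk) * E0 + 2 * a / ((1 + a * muk) * mufB) * e = (E0 + 2 * a * e / mufB) / (1 + a * muk).
  by field; apply/andP; split; apply: lt0r_neq0.
by rewrite ler_pdivlMr.
Qed.


End Main.

Unset Implicit Arguments. Set Strict Implicit. Set Printing Implicit Defensive.
Lemma fin_step (R : realType) (r EN e0 S C eN rN : R) :
  r * EN <= r * (rN * e0 + C * S) ->
  r * EN + C * (r * eN) <= r * rN * e0 + C * (r * S + r * eN).
Proof. move=> H; have E1 : r * (rN * e0 + C * S) = r * rN * e0 + C * (r * S) by ring. lra. Qed.

Theorem corollary5p7 (R : realType) (m n : nat)
  (B : 'M[R]_(n, m))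
  (f : 'cV[R]_m -> R) (gf : 'cV[R]_m -> 'cV[R]_m)
  (h : 'cV[R]_n -> R) (gh : 'cV[R]_n -> 'cV[R]_n)
  (TU IV : 'M[R]_m) (TP IQ : 'M[R]_n)
  (us : 'cV[R]_m) (ps : 'cV[R]_n)
  (muh Lh muf Lf mufB muhB LhB LeU LS2 : R)
  (alpha eps : nat -> R)
  (u : nat -> 'cV[R]_m) (p : nat -> 'cV[R]_n) :
  (n <= m)%N ->
  \rank B = n ->
  (* gf, gh are the gradients of f, h *)
  (forall x v, is_derive (0 : R) 1 (fun t : R => f (x + t *: v)) (dotv (gf x) v)) ->
  (forall x v, is_derive (0 : R) 1 (fun t : R => h (x + t *: v)) (dotv (gh x) v)) ->
  (* saddle point *)
  gf us + B^T *m ps = 0 ->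
  B *m us = gh ps ->
  SPD TU -> SPD IV -> SPD TP -> SPD IQ ->
  0 <= muh -> S11 h gh TP muh Lh -> Lh <= 1 ->
  0 <= muf -> S11 f gf TU muf Lf -> Lf <= 1 ->
  0 < mufB -> strongly_convex (fB f B TP) (dfB gf B TP) IV mufB ->
  0 < muhB -> strongly_convex (hB h B TU) (dhB gh B TU) IQ muhB ->
  (* L_{h_B,IQ}: Lipschitz constant of grad h_B (dual norm IQ^{-1} vs IQ) *)
  0 <= LhB ->
  (forall x y, nsq (invmx IQ) (dhB gh B TU x - dhB gh B TU y)
               <= LhB ^+ 2 * nsq IQ (x - y)) ->
  (* L_{e_U,IV}: Lipschitz constant of e_U in the IV norm *)
  0 <= LeU ->
  (forall x y, nsq IV (eU gf TU x - eU gf TU y) <= LeU ^+ 2 * nsq IV (x - y)) ->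
  (* L_S^2 = lambda_max(IQ^{-1} B IV^{-1} B^T) *)
  eigenvalue (invmx IQ *m B *m invmx IV *m B^T) LS2 ->
  (forall a, eigenvalue (invmx IQ *m B *m invmx IV *m B^T) a -> a <= LS2) ->
  (* the iteration *)
  (forall k, p k.+1 = p k - alpha k *: (invmx IQ *m
       (gh (p k) - B *m (u k - invmx TU *m (gf (u k) + B^T *m p k))))) ->
  (forall k, nsq (invmx IV) (dftB gf gh B TP IV (alpha k) (u k) (p k.+1) (u k.+1))
             <= eps k) ->
  let LSQ2 := LhB ^+ 2 + LeU ^+ 2 * LS2 in
  let E := Energy IV IQ us ps in
  (forall k, 0 < alpha k -> alpha k < muhB / LSQ2 ->
     let muk := Num.min (mufB / 2) (muhB - alpha k * LSQ2) in
     E (u k.+1) (p k.+1) <= 1 / (1 + alpha k * muk) * E (u k) (p k)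
        + 2 * alpha k / ((1 + alpha k * muk) * mufB) * eps k)
  /\
  ((forall k, alpha k = muhB / (2 * LSQ2)) ->
     let mu := Num.min mufB muhB in
     let rho := 1 / (1 + muhB * mu / (4 * LSQ2)) in
     (0 < rho /\ rho < 1) /\
     forall N : nat,
       E (u N.+1) (p N.+1) <= rho ^+ N.+1 * E (u 0%N) (p 0%N)
         + muhB / (mufB * LSQ2) * \sum_(k < N.+1) rho ^+ (N - k).+1 * eps k).
Proof.
move=> nm rkB dfx dhx Hs1 Hs2 HTU HIV HTP HIQ muh0 Sh Lh1 muf0 Sf Lf1
  mufBp SCf muhBp SCh LhB0 HLh LeU0 HLe eigL maxL Hp He LSQ2 E.
have LS0 := LS2_ge0 HIV HIQ eigL.
have Hray := rayleigh HIV HIQ LS0 maxL.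
have step : forall k, 0 < alpha k -> alpha k < muhB / LSQ2 ->
     let muk := Num.min (mufB / 2) (muhB - alpha k * LSQ2) in
     E (u k.+1) (p k.+1) <= 1 / (1 + alpha k * muk) * E (u k) (p k)
        + 2 * alpha k / ((1 + alpha k * muk) * mufB) * eps k.
  move=> k ak akl.
  exact: (one_step HTU HIV HTP HIQ Hs1 Hs2 muh0 Sh Lh1 muf0 Sf Lf1 mufBp SCf muhBp SCh
     HLh HLe LS0 Hray (Hp k) (He k) erefl erefl ak akl).
have IQT := SPD_sym HIQ.
have LSQp : 0 < LSQ2.
  have [x0 _ x0n] := eig_col eigL.
  have SM := strong_mono 0 x0 IQT SCh.
  have HL := HLh x0 0.
  set g := dhB gh B TU x0 - dhB gh B TU 0 in SM HL.
  rewrite subr0 in SM HL.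
  set q := nsq IQ x0 in SM HL.
  have qp : 0 < q by case: HIQ => _ H; apply: H.
  have Y := @young_bound _ _ IQ g x0 muhB (LhB ^+ 2 / muhB * q) HIQ (ltW muhBp).
  have Y' : 2 * dotv g x0 <= LhB ^+ 2 / muhB * q + muhB * q.
    apply: Y.
      by apply: mulr_ge0 => //; [apply: divr_ge0; [apply: sqr_ge0 | apply: ltW] | apply: ltW].
    by rewrite mulrA mulrCA mulfV ?mulr1 ?gt_eqF.
  have H1 : muhB * q <= LhB ^+ 2 / muhB * q by lra.
  have H2 : muhB * (muhB * q) <= LhB ^+ 2 * q.
    have -> : LhB ^+ 2 * q = muhB * (LhB ^+ 2 / muhB * q) by field; apply: lt0r_neq0.
    by rewrite ler_pM2l.
  have H3 : muhB ^+ 2 <= LhB ^+ 2 by rewrite -(ler_pM2r qp) expr2 -mulrA.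
  have H4 : 0 <= LeU ^+ 2 * LS2 by apply: mulr_ge0 => //; apply: sqr_ge0.
  have H5 : 0 < muhB ^+ 2 by apply: exprn_gt0.
  rewrite /LSQ2; lra.
split; first exact: step.
move=> Hal mu rho.
have mup : 0 < mu by rewrite /mu lt_min mufBp muhBp.
have LSQn : LSQ2 != 0 by apply: lt0r_neq0.
set x := muhB * mu / (4 * LSQ2).
have xp : 0 < x by rewrite /x; apply: divr_gt0; [apply: mulr_gt0 | apply: mulr_gt0].
have rhop : 0 < rho by rewrite /rho -/x; apply: divr_gt0 => //; lra.
have rho1 : rho < 1 by rewrite /rho -/x ltr_pdivrMr ?mul1r; lra.
split; first by split.
have emin : Num.min (mufB / 2) (muhB - muhB / (2 * LSQ2) * LSQ2) = mu / 2.
  have -> : muhB - muhB / (2 * LSQ2) * LSQ2 = muhB / 2 by field.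
  rewrite /mu; have [le|lt] := leP mufB muhB.
    by rewrite !min_l // ler_pM2r.
  by rewrite !min_r ?ltW // ltr_pM2r.
have step' : forall k, E (u k.+1) (p k.+1) <= rho * E (u k) (p k) + muhB / (mufB * LSQ2) * (rho * eps k).
  move=> k.
  have ak : 0 < alpha k by rewrite Hal; apply: divr_gt0 => //; apply: mulr_gt0.
  have akl : alpha k < muhB / LSQ2.
    rewrite Hal ltr_pM2l // ltf_pV2 ?posrE ?mulr_gt0 //; lra.
  have := step k ak akl; rewrite /= Hal emin.
  have -> : 1 / (1 + muhB / (2 * LSQ2) * (mu / 2)) = rho.
    by rewrite /rho /x; congr (1 / (1 + _)); field.
  have -> : 2 * (muhB / (2 * LSQ2)) / ((1 + muhB / (2 * LSQ2) * (mu / 2)) * mufB) =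
            muhB / (mufB * LSQ2) * rho.
    rewrite /rho /x; field.
    rewrite LSQn /= (gt_eqF mufBp) andbT; apply: lt0r_neq0.
    by apply: addr_gt0; [apply: mulr_gt0 | apply: mulr_gt0].
  by rewrite (mulrA (muhB / (mufB * LSQ2)) rho (eps k)).
elim=> [|N IH].
  rewrite big_ord1 subnn expr1; exact: (step' 0%N).
apply: (le_trans (step' N.+1)).
rewrite big_ord_recr /= subnn expr1.
have -> : \sum_(i < N.+1) rho ^+ (N.+1 - i).+1 * eps i
    = rho * \sum_(k < N.+1) rho ^+ (N - k).+1 * eps k.
  rewrite mulr_sumr; apply: eq_bigr => i _ /=.
  have Hi : (i <= N)%N by have := ltn_ord i.
  by rewrite (subSn Hi) (exprS rho (N - i).+1) mulrA.
rewrite (exprS rho N.+1).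
apply: fin_step.
Show.
exact: (ler_wpM2l (ltW rhop) IH).
Qed.
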